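(* For every $n \geq 3$, the $n$-sun $S_n$ is in $B_2^m$.
   Context: For $n\ge 3$, the $n$-sun $S_n$ is the graph with vertex set $\{x_1,\dots,x_n,y_1,\dots,y_n\}$ and edge set consisting of all edges $\{x_i,x_j\}$ for $1\le i<j\le n$, the edges $\{x_i,y_i\},\{x_{i+1},y_i\}$ for $1\le i<n$, and the edges $\{x_1,y_n\},\{x_n,y_n\}$. An EPG representation of a graph is a set of paths on a rectangular grid (sequences of grid points joined consecutively by grid edges), one per vertex, such that two vertices are adjacent iff their paths share a grid edge. A bend is a point of a path where a horizontal and a vertical grid edge of the path meet. A path is monotonic if it is ascending in both columns and rows. $B_k^m$ is the class of graphs having an EPG representation in which every path is monotonic and has at most $k$ bends. *)

(* Defs.v *)
From mathcomp Require Import all_boot.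
Set Implicit Arguments. Unset Strict Implicit. Unset Printing Implicit Defensive.

(* Grid points are pairs (column, row) of naturals; any finite set of paths
   lives in a finite rectangular grid, so this is the rectangular grid. *)
Definition point := (nat * nat)%type.

Definition grid_adj (p q : point) : bool :=
  ((p.1 == q.1) && ((p.2.+1 == q.2) || (q.2.+1 == p.2))) ||
  ((p.2 == q.2) && ((p.1.+1 == q.1) || (q.1.+1 == p.1))).

Definition edges (s : seq point) : seq (point * point) := zip s (behead s).

Definition grid_path (s : seq point) : bool :=
  (1 < size s) && all (fun e => grid_adj e.1 e.2) (edges s).

Definition horizontal (e : point * point) : bool := e.1.2 == e.2.2.

Definition bends (s : seq point) : nat :=
  count (fun ee : (point * point) * (point * point) =>
           horizontal ee.1 != horizontal ee.2)
        (zip (edges s) (behead (edges s))).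

Definition monotonic (s : seq point) : bool :=
  all (fun e : point * point => (e.1.1 <= e.2.1) && (e.1.2 <= e.2.2)) (edges s).

Definition share_edge (s t : seq point) : bool :=
  has (fun e => has (fun f => (e == f) || (e == (f.2, f.1))) (edges t)) (edges s).

(* B_k^m : graphs with an EPG representation by monotonic paths with
   at most k bends. A graph is a finite vertex type with adjacency relation. *)
Definition in_Bkm (k : nat) (V : finType) (adj : rel V) : Prop :=
  exists P : V -> seq point,
    (forall v, [/\ grid_path (P v), monotonic (P v) & bends (P v) <= k]) /\
    (forall u v, u != v -> (adj u v <-> share_edge (P u) (P v))).

(* The n-sun: inl i = x_(i+1), inr i = y_(i+1), for i : 'I_n (0-indexed).
   x's form a clique; y_i is adjacent to x_i and x_(i+1 mod n). *)
Arguments edges : clear implicits.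
Definition sun_adj (n : nat) : rel ('I_n + 'I_n) :=
  fun u v =>
    match u, v with
    | inl i, inl j => i != j
    | inl i, inr j => (nat_of_ord i == j) || (nat_of_ord i == j.+1 %% n)
    | inr i, inl j => (nat_of_ord j == i) || (nat_of_ord j == i.+1 %% n)
    | inr _, inr _ => false
    end.
Arguments sun_adj n : clear implicits.
Arguments in_Bkm k V adj : clear implicits.

(* Main.v *)
Require Import Defs.
From mathcomp Require Import all_boot zify.

Lemma zip_map_iota (T : Type) (f : nat -> T) m L :
  zip (map f (iota m L.+1)) (behead (map f (iota m L.+1))) = map (fun k => (f k, f k.+1)) (iota m L).
Proof.
elim: L m => [|L IH] m //=.
by move: (IH m.+1) => /= ->.
Qed.

Lemma edges_map_iota (f : nat -> point) m L :
  edges (map f (iota m L.+1)) = map (fun k => (f k, f k.+1)) (iota m L).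
Proof. exact: zip_map_iota. Qed.

Definition stepP (p q : point) : Prop :=
  (q.1 = p.1 /\ q.2 = p.2.+1) \/ (q.1 = p.1.+1 /\ q.2 = p.2).

Lemma path_ok (f : nat -> point) m :
  (forall k, k < m.+1 -> stepP (f k) (f k.+1)) ->
  grid_path (map f (iota 0 m.+2)) && monotonic (map f (iota 0 m.+2)).
Proof.
move=> H; rewrite /grid_path /monotonic edges_map_iota size_map size_iota.
have [] : all (fun e : point * point => grid_adj e.1 e.2) [seq (f k, f k.+1) | k <- iota 0 m.+1] /\
  all (fun e : point * point => (e.1.1 <= e.2.1) && (e.1.2 <= e.2.2)) [seq (f k, f k.+1) | k <- iota 0 m.+1].
  split; apply/allP => e /mapP [k]; rewrite mem_iota => /andP [_ hk] -> /=;
  move: (H k hk); case: (f k.+1) => a b; case: (f k) => c d; rewrite /stepP /= => -[[-> ->]|[-> ->]];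
  rewrite /grid_adj /= ?eqxx ?leqnn ?leqnSn ?orbT //.
by move=> -> ->.
Qed.

Lemma sub_in_count (T : eqType) (a1 a2 : pred T) (s : seq T) :
  (forall x, x \in s -> a1 x -> a2 x) -> count a1 s <= count a2 s.
Proof.
elim: s => //= x s IH H; apply: leq_add.
  by case: (boolP (a1 x)) => // /(H x (mem_head _ _)) ->.
by apply: IH => y ys; apply: H; rewrite in_cons ys orbT.
Qed.

Lemma count_le2 (p : pred nat) s b1 b2 : uniq s ->
  (forall k, k \in s -> p k -> k = b1 \/ k = b2) -> count p s <= 2.
Proof.
move=> us H.
have h1 : count p s <= count (predU (pred1 b1) (pred1 b2)) s.
  apply: sub_in_count => k ks pk; move: (H k ks pk) => [->|->]; by rewrite /= eqxx ?orbT.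

have h2 := count_predUI (pred1 b1) (pred1 b2) s.
have h3 : count (pred1 b1) s <= 1 by rewrite (count_uniq_mem b1 us) leq_b1.
have h4 : count (pred1 b2) s <= 1 by rewrite (count_uniq_mem b2 us) leq_b1.
lia.
Qed.

Lemma bends_le2 (f : nat -> point) m b1 b2 :
  (forall k, k < m -> horizontal (f k, f k.+1) != horizontal (f k.+1, f k.+2) -> k = b1 \/ k = b2) ->
  bends (map f (iota 0 m.+2)) <= 2.
Proof.
move=> H; rewrite /bends edges_map_iota (zip_map_iota _ (fun k => (f k, f k.+1))) count_map.
apply: (count_le2 _ _ b1 b2 (iota_uniq 0 m)) => k; rewrite mem_iota => /andP [_ hk] /=.
exact: H.
Qed.

Lemma share_iota (f g : nat -> point) m m' :
  share_edge (map f (iota 0 m.+2)) (map g (iota 0 m'.+2)) <->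
  exists k k', [/\ k < m.+1, k' < m'.+1 &
     ((f k = g k' /\ f k.+1 = g k'.+1) \/ (f k = g k'.+1 /\ f k.+1 = g k'))].
Proof.
rewrite /share_edge !edges_map_iota.
set B := map (fun k => (g k, g k.+1)) (iota 0 m'.+1).
have HB : forall e, e \in B <-> exists2 k', k' < m'.+1 & e = (g k', g k'.+1).
  move=> e; split; first by case/mapP => k'; rewrite mem_iota => hk' ->; exists k'.
  by case=> k' hk' ->; apply/mapP; exists k'; rewrite ?mem_iota.
clearbody B; split.
  case/hasP => e /mapP [k]; rewrite mem_iota /= => hk -> /=.
  case/hasP => e' /HB [k' hk' ->].
  by case/orP => /eqP [E1 E2]; exists k, k'; split => //; [left|right].
move=> [k [k' [hk hk' H]]]; apply/hasP; exists (f k, f k.+1).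
  by apply/mapP; exists k; rewrite ?mem_iota.
apply/hasP; exists (g k', g k'.+1); first by apply/HB; exists k'.
by case: H => [[-> ->]|[-> ->]]; rewrite eqxx ?orbT.
Qed.

Definition RR n := 2 * n + 4.
Definition xpt n (i k : nat) : point :=
  (if k <= RR n then i else i + (k - RR n), if k <= RR n then k else RR n).
Definition xm n i := 2 * n + 3 + (n - i).
Definition ypt (a b r k : nat) : point :=
  (if k <= 0 then a else if k <= b - a + 1 then a + k - 1 else b,
   if k <= 0 then r else if k <= b - a + 1 then r.+1 else r.+2).
Definition ym a b := b - a + 1.
Definition yA n j := if j.+2 <= n then j else 0.
Definition yB n j := if j.+2 <= n then j.+1 else n - 1.
Definition yR n j := if j.+2 <= n then 2 * j else 2 * n.

Ltac splitifs := repeat match goal with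
  |- context[if ?a <= ?b then _ else _] => case: (leqP a b) => ? end.

Ltac splitpairs := repeat match goal with H : (_, _) = (_, _) |- _ => case: H => ? ? end.
Ltac crush := unfold stepP, xpt, ypt, RR, horizontal in *; simpl; splitifs; intros; splitpairs; try (congr pair); lia.

Lemma xpath_ok n i : i < n ->
  [/\ grid_path (map (xpt n i) (iota 0 (xm n i).+2)),
      monotonic (map (xpt n i) (iota 0 (xm n i).+2)) &
      bends (map (xpt n i) (iota 0 (xm n i).+2)) <= 2].
Proof.
move=> hi.
have /andP [h1 h2] : grid_path (map (xpt n i) (iota 0 (xm n i).+2)) && monotonic (map (xpt n i) (iota 0 (xm n i).+2)).
  by apply: path_ok => k; rewrite /xm => hk; crush.
split => //; apply: (bends_le2 _ _ (RR n - 1) (RR n - 1)) => k hk.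
rewrite /xm in hk; crush.
Qed.

Lemma ypath_ok a b r : a < b ->
  [/\ grid_path (map (ypt a b r) (iota 0 (ym a b).+2)),
      monotonic (map (ypt a b r) (iota 0 (ym a b).+2)) &
      bends (map (ypt a b r) (iota 0 (ym a b).+2)) <= 2].
Proof.
move=> hab.
have /andP [h1 h2] : grid_path (map (ypt a b r) (iota 0 (ym a b).+2)) && monotonic (map (ypt a b r) (iota 0 (ym a b).+2)).
  by apply: path_ok => k; rewrite /ym => hk; crush.
split => //; apply: (bends_le2 _ _ 0 (b - a)) => k hk.
rewrite /ym in hk; crush.
Qed.

Lemma yparams n j : j < n -> 3 <= n ->
  (j.+2 <= n /\ yA n j = j /\ yB n j = j.+1 /\ yR n j = 2 * j /\ j.+1 %% n = j.+1) \/
  (j.+1 = n /\ yA n j = 0 /\ yB n j = n - 1 /\ yR n j = 2 * n /\ j.+1 %% n = 0).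
Proof.
move=> hj hn; rewrite /yA /yB /yR; case: (leqP j.+2 n) => h.
  by left; rewrite modn_small //; do !split.
have e : j.+1 = n by lia.
by right; rewrite -[in _ %% _]e modnn; do !split.
Qed.

Definition Psun n (v : 'I_n + 'I_n) : seq point :=
  match v with
  | inl i => map (xpt n i) (iota 0 (xm n i).+2)
  | inr j => map (ypt (yA n j) (yB n j) (yR n j)) (iota 0 (ym (yA n j) (yB n j)).+2)
  end.

Theorem theorem3p8 (n : nat) : 3 <= n -> in_Bkm 2 _ (sun_adj n).
Proof.
move=> hn; exists (Psun n); split.
  case=> [i|j] /=; first exact: xpath_ok.
  apply: ypath_ok.
  by case: (yparams _ _ (ltn_ord j) hn) => [[? [-> [-> _]]]|[? [-> [-> _]]]]; lia.
case=> [i|i] [j|j] neq /=; have hi := ltn_ord i; have hj := ltn_ord j.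
- have nij : (i : nat) != j by apply: contra neq => /eqP /val_inj ->.
  rewrite nij; split => // _; apply/share_iota.
  exists (RR n + (n - 1 - i)), (RR n + (n - 1 - j)); split; rewrite ?/xm ?/RR; try lia.
  left; split; crush.
- case: (yparams _ _ hj hn) => [[? [-> [-> [-> ->]]]]|[? [-> [-> [-> ->]]]]]; split.
  + move=> adj; apply/share_iota.
    have [ea|eb] : (i : nat) = j \/ (i : nat) = j.+1 by lia.
    * exists (2 * j), 0; split; rewrite ?/xm ?/ym ?/RR; try lia; left; split; crush.
    * exists (2 * j).+1, (j.+1 - j + 1); split; rewrite ?/xm ?/ym ?/RR; try lia; left; split; crush.
  + case/share_iota => k [k' [hk hk' [[E1 E2]|[E1 E2]]]]; move: E1 E2; rewrite /xm /ym in hk hk'; crush.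
  + move=> adj; apply/share_iota.
    have [ea|eb] : (i : nat) = 0 \/ (i : nat) = n - 1 by lia.
    * exists (2 * n), 0; split; rewrite ?/xm ?/ym ?/RR; try lia; left; split; crush.
    * exists (2 * n).+1, (n - 1 - 0 + 1); split; rewrite ?/xm ?/ym ?/RR; try lia; left; split; crush.
  + case/share_iota => k [k' [hk hk' [[E1 E2]|[E1 E2]]]]; move: E1 E2; rewrite /xm /ym in hk hk'; crush.
- case: (yparams _ _ hi hn) => [[? [-> [-> [-> ->]]]]|[? [-> [-> [-> ->]]]]]; split.
  + move=> adj; apply/share_iota.
    have [ea|eb] : (j : nat) = i \/ (j : nat) = i.+1 by lia.
    * exists 0, (2 * i); split; rewrite ?/xm ?/ym ?/RR; try lia; left; split; crush.
    * exists (i.+1 - i + 1), (2 * i).+1; split; rewrite ?/xm ?/ym ?/RR; try lia; left; split; crush.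
  + case/share_iota => k [k' [hk hk' [[E1 E2]|[E1 E2]]]]; move: E1 E2; rewrite /xm /ym in hk hk'; crush.
  + move=> adj; apply/share_iota.
    have [ea|eb] : (j : nat) = 0 \/ (j : nat) = n - 1 by lia.
    * exists 0, (2 * n); split; rewrite ?/xm ?/ym ?/RR; try lia; left; split; crush.
    * exists (n - 1 - 0 + 1), (2 * n).+1; split; rewrite ?/xm ?/ym ?/RR; try lia; left; split; crush.
  + case/share_iota => k [k' [hk hk' [[E1 E2]|[E1 E2]]]]; move: E1 E2; rewrite /xm /ym in hk hk'; crush.
- have nij : (i : nat) != j by apply: contra neq => /eqP /val_inj ->.
  split => // /share_iota [k [k' [hk hk' H]]]; exfalso; move: H.
  case: (yparams _ _ hi hn) => [[? [-> [-> [-> _]]]]|[? [-> [-> [-> _]]]]];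
  case: (yparams _ _ hj hn) => [[? [-> [-> [-> _]]]]|[? [-> [-> [-> _]]]]];
  rewrite /ym in hk hk' *; case=> -[E1 E2]; move: E1 E2; crush.
Qed.
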